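(* Let $A,B,C$ be finite-dimensional quantum systems, $C'$ a copy of $C$, and let $\Lambda^{C\to AB}$ be a channel extension of a channel $\Lambda^{C\to B}$. Then $\Lambda^{C\to AB}$ is steerable if and only if the Choi–Jamiołkowski state $J_{C'AB}(\Lambda^{C\to AB})$ is steerable by Alice acting on $A$ (i.e. steerable from $A$ to $BC'$).
   Context: A channel extension of $\Lambda^{C\to B}$ is a channel (completely positive trace-preserving map) $\Lambda^{C\to AB}$ with $\mathrm{Tr}_A\circ\Lambda^{C\to AB}=\Lambda^{C\to B}$. An instrument is a collection $\{\Lambda_\lambda\}_\lambda$ of completely positive maps whose sum is a channel. A channel assemblage $\{\Lambda_{a|x}\}_{a,x}$ for $\Lambda^{C\to B}$ is a collection of completely positive maps with $\sum_a\Lambda_{a|x}=\Lambda^{C\to B}$ for all $x$; it is unsteerable if there exist an instrument $\{\Lambda_\lambda\}_\lambda$ and conditional probability distributions $p(a|x,\lambda)$ with $\Lambda_{a|x}=\sum_\lambda p(a|x,\lambda)\Lambda_\lambda$. A measurement assemblage on $A$ is a family $\{M^A_{a|x}\}_{a,x}$ with $\{M^A_{a|x}\}_a$ a POVM for each $x$; it induces the channel assemblage $\Lambda_{a|x}[X]=\mathrm{Tr}_A(M^A_{a|x}\Lambda^{C\to AB}[X])$. The extension $\Lambda^{C\to AB}$ is unsteerable if every measurement assemblage on $A$ induces an unsteerable channel assemblage, and steerable otherwise. The Choi–Jamiołkowski operator of a map $\Gamma^{C\to Y}$ is $J_{C'Y}(\Gamma)=(\mathrm{id}_{C'}\otimes\Gamma)[\psi_+^{CC'}]$,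 where $\psi_+^{CC'}$ is a fixed maximally entangled pure state of $C$ and $C'$. A bipartite state $\rho^{XY}$ is unsteerable by (a party acting on) $X$ if for every measurement assemblage $\{M^X_{a|x}\}$ on $X$ the state assemblage $\rho_{a|x}=\mathrm{Tr}_X(M^X_{a|x}\rho^{XY})$ can be written as $\rho_{a|x}=\sum_\lambda p(a|x,\lambda)\rho_\lambda$ with $\rho_\lambda\ge0$, $\sum_\lambda\rho_\lambda=\rho^Y$ and $p(a|x,\lambda)$ conditional probability distributions; otherwise it is steerable by $X$. *)

(* Defs.v *)
From HB Require Import structures.
From mathcomp Require Import all_boot all_order all_algebra.
From mathcomp Require Import complex Rstruct.
Set Implicit Arguments. Unset Strict Implicit. Unset Printing Implicit Defensive.
Import Order.TTheory GRing.Theory Num.Theory.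
Local Open Scope ring_scope.

Definition CC : numClosedFieldType := complex Rdefinitions.R.

(* A finite-dimensional quantum system is given by a finite index type
   (its computational basis); an operator on it is a complex matrix indexed
   by that type. Composite systems are indexed by products of index types. *)
Definition Op (I : finType) := I -> I -> CC.
Definition Map (I J : finType) := Op I -> Op J.

Definition idop (I : finType) : Op I := fun i j => (i == j)%:R.
Definition opmul (I : finType) (P Q : Op I) : Op I :=
  fun i j => \sum_k P i k * Q k j.
Definition tens (I J : finType) (P : Op I) (Q : Op J) : Op (prod I J) :=
  fun p q => P p.1 q.1 * Q p.2 q.2.
Definition tr (I : finType) (M : Op I) : CC := \sum_i M i i.

Definition ptr1 (I J : finType) (M : Op (prod I J)) : Op J :=
  fun j j' => \sum_i M (i, j) (i, j').

Definition psd (I : finType) (M : Op I) : Prop :=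
  forall v : I -> CC, 0 <= \sum_i \sum_j (v i)^* * M i j * v j.

Definition state (I : finType) (rho : Op I) : Prop := psd rho /\ tr rho = 1.

Definition linear_map (I J : finType) (G : Map I J) : Prop :=
  forall (a : CC) (X Y : Op I) j j',
    G (fun i i' => a * X i i' + Y i i') j j' = a * G X j j' + G Y j j'.

(* id_K (x) G *)
Definition ampl (K I J : finType) (G : Map I J) : Map (prod K I) (prod K J) :=
  fun X p q => G (fun i i' => X (p.1, i) (q.1, i')) p.2 q.2.

Definition CP (I J : finType) (G : Map I J) : Prop :=
  linear_map G /\
  forall (k : nat) (X : Op (prod 'I_k I)), psd X -> psd (ampl G X).

Definition TP (I J : finType) (G : Map I J) : Prop :=
  forall X : Op I, tr (G X) = tr X.

Definition channel (I J : finType) (G : Map I J) : Prop := CP G /\ TP G.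

Definition channel_extension (A B C : finType)
    (LAB : Map C (prod A B)) (LB : Map C B) : Prop :=
  channel LAB /\ forall X b b', ptr1 (LAB X) b b' = LB X b b'.

Definition povm (A O : finType) (M : O -> Op A) : Prop :=
  (forall o, psd (M o)) /\ forall i j, \sum_o M o i j = idop i j.

(* measurement assemblage {M_{a|x}} : M x a *)
Definition meas_assemblage (A Xs O : finType) (M : Xs -> O -> Op A) : Prop :=
  forall x, povm (M x).

(* conditional probability distributions p(a|x,l) : p x l a *)
Definition cond_prob (Xs L O : finType) (p : Xs -> L -> O -> CC) : Prop :=
  (forall x l a, 0 <= p x l a) /\ forall x l, \sum_a p x l a = 1.

Definition instrument (C B L : finType) (G : L -> Map C B) : Prop :=
  (forall l, CP (G l)) /\ channel (fun X b b' => \sum_l G l X b b').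

Definition channel_assemblage (C B Xs O : finType)
    (LB : Map C B) (G : Xs -> O -> Map C B) : Prop :=
  (forall x a, CP (G x a)) /\
  forall x X b b', \sum_a G x a X b b' = LB X b b'.

Definition unsteerable_chan_assemblage (C B Xs O : finType)
    (G : Xs -> O -> Map C B) : Prop :=
  exists (L : finType) (Gl : L -> Map C B) (p : Xs -> L -> O -> CC),
    instrument Gl /\ cond_prob p /\
    forall x a X b b', G x a X b b' = \sum_l p x l a * Gl l X b b'.

Definition induced_chan_assemblage (A B C Xs O : finType)
    (LAB : Map C (prod A B)) (M : Xs -> O -> Op A) : Xs -> O -> Map C B :=
  fun x a X => ptr1 (opmul (tens (M x a) (@idop B)) (LAB X)).

Definition unsteerable_extension (A B C : finType) (LAB : Map C (prod A B)) : Prop :=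
  forall (Xs O : finType) (M : Xs -> O -> Op A),
    meas_assemblage M ->
    unsteerable_chan_assemblage (induced_chan_assemblage LAB M).

Definition steerable_extension (A B C : finType) (LAB : Map C (prod A B)) : Prop :=
  ~ unsteerable_extension LAB.

Definition unsteerable_state (X Y : finType) (rho : Op (prod X Y)) : Prop :=
  forall (Xs O : finType) (M : Xs -> O -> Op X),
    meas_assemblage M ->
    exists (L : finType) (rl : L -> Op Y) (p : Xs -> L -> O -> CC),
      (forall l, psd (rl l)) /\
      (forall y y', \sum_l rl l y y' = ptr1 rho y y') /\
      cond_prob p /\
      forall x a y y',
        ptr1 (opmul (tens (M x a) (@idop Y)) rho) y y'
        = \sum_l p x l a * rl l y y'.

Definition steerable_state (X Y : finType) (rho : Op (prod X Y)) : Prop :=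
  ~ unsteerable_state rho.

(* fixed maximally entangled state psi_+ = |phi><phi|,
   |phi> = #|C|^{-1/2} \sum_i |i>_C |i>_C' ;
   J_{C'Y}(G) = (id_{C'} (x) G)[psi_+], an operator on C' (x) Y,
   where C' is a copy of C (same index type). *)
Definition choi (C Y : finType) (G : Map C Y) : Op (prod C Y) :=
  fun p q => #|C|%:R^-1 * G (fun i j => ((i == p.1) && (j == q.1))%:R) p.2 q.2.

Definition regroup_A_BC (C A B : finType) (J : Op (prod C (prod A B))) : Op (prod A (prod B C)) :=
  fun p q => J (p.2.2, (p.1, p.2.1)) (q.2.2, (q.1, q.2.1)).

(* Main.v *)
Require Import Defs.
From mathcomp Require Import all_boot all_order all_algebra complex ring sesquilinear spectral.
From Stdlib Require Import FunctionalExtensionality.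
Set Implicit Arguments. Unset Strict Implicit. Unset Printing Implicit Defensive.
Import Order.TTheory GRing.Theory Num.Theory.
Local Open Scope ring_scope.

Lemma cM (a b : CC) : (a * b)^* = a^* * b^*. Proof. exact: rmorphM. Qed.
Lemma cD (a b : CC) : (a + b)^* = a^* + b^*. Proof. exact: rmorphD. Qed.
Lemma cB (a b : CC) : (a - b)^* = a^* - b^*. Proof. exact: rmorphB. Qed.
Lemma cN (a : CC) : (- a)^* = - a^*. Proof. exact: rmorphN. Qed.
Lemma c1 : (1 : CC)^* = 1. Proof. exact: rmorph1. Qed.
Lemma cK (a : CC) : a^*^* = a. Proof. exact: conjCK. Qed.
Lemma cnat n : (n%:R : CC)^* = n%:R. Proof. exact: conjC_nat. Qed.
Lemma ci : ('i : CC)^* = - 'i. Proof. exact: conjCi. Qed.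

Lemma cSum (I : finType) (F : I -> CC) : (\sum_i F i)^* = \sum_i (F i)^*.
Proof. exact: rmorph_sum. Qed.

Lemma sumD (I : finType) (F G : I -> CC) :
  \sum_i (F i + G i) = \sum_i F i + \sum_i G i.
Proof. exact: big_split. Qed.

Lemma sum_deltal (I : finType) (x : I) (F : I -> CC) :
  \sum_j (j == x)%:R * F j = F x.
Proof.
rewrite (bigD1 x) // big1 => [|j /negbTE ->]; last by rewrite mul0r.
by rewrite eqxx mul1r; exact: addr0.
Qed.

Lemma sum_deltar (I : finType) (x : I) (F : I -> CC) :
  \sum_j F j * (j == x)%:R = F x.
Proof. by under eq_bigr do rewrite mulrC; exact: sum_deltal. Qed.

Lemma sum_deltal' (I : finType) (x : I) (F : I -> CC) :
  \sum_j (x == j)%:R * F j = F x.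
Proof. by under eq_bigr do rewrite eq_sym; exact: sum_deltal. Qed.

Lemma sum_pair (I J : finType) (F : I * J -> CC) :
  \sum_p F p = \sum_i \sum_j F (i, j).
Proof. by rewrite pair_bigA; apply: eq_bigr => -[]. Qed.

Definition quad (I : finType) (Z : Op I) (v : I -> CC) :=
  \sum_i \sum_j (v i)^* * Z i j * v j.

Lemma psdE (I : finType) (Z : Op I) : psd Z <-> forall v, 0 <= quad Z v.
Proof. by []. Qed.

Lemma psd_reindex (I J : finType) (f : I -> J) (g : J -> I)
  (fK : cancel f g) (gK : cancel g f) (Z : Op J) :
  psd Z -> psd (fun i i' => Z (f i) (f i')).
Proof.
move=> HZ v; have := HZ (fun j => v (g j)).
have bf : {on [pred j | true], bijective f} by apply: onW_bij; exists g.
rewrite (reindex f) //; under eq_bigr => i _ do rewrite (reindex f) //.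
by under eq_bigr => i _ do under eq_bigr => i' _ do rewrite !fK.
Qed.

Lemma psd_scale (I : finType) (c : CC) (Z : Op I) :
  0 <= c -> psd Z -> psd (fun i j => c * Z i j).
Proof.
move=> c0 HZ v.
have -> : \sum_i \sum_j (v i)^* * (c * Z i j) * v j = c * quad Z v.
  rewrite /quad mulr_sumr; apply: eq_bigr => i _; rewrite mulr_sumr.
  by apply: eq_bigr => j _; ring.
exact: (mulr_ge0 c0 (HZ v)).
Qed.

Lemma psd_sum (I K : finType) (Z : K -> Op I) :
  (forall k, psd (Z k)) -> psd (fun i j => \sum_k Z k i j).
Proof.
move=> HZ v.
have -> : \sum_i \sum_j (v i)^* * (\sum_k Z k i j) * v j = \sum_k quad (Z k) v.
  rewrite /quad [RHS]exchange_big; apply: eq_bigr => i _; rewrite [RHS]exchange_big.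
  apply: eq_bigr => j _; rewrite mulr_sumr mulr_suml.
  by apply: eq_bigr => k _.
by apply: sumr_ge0 => k _; exact: HZ.
Qed.

Lemma psd_pull (I J : finType) (K : J -> I -> CC) (Z : Op J) :
  psd Z -> psd (fun i i' => \sum_j \sum_j' (K j i)^* * Z j j' * K j' i').
Proof.
move=> HZ v.
suff -> : \sum_i \sum_i' (v i)^* * (\sum_j \sum_j' (K j i)^* * Z j j' * K j' i') * v i'
   = quad Z (fun j => \sum_i K j i * v i) by apply: HZ.
rewrite /quad.
have E1 : forall j j', (\sum_i K j i * v i)^* * Z j j' * (\sum_i K j' i * v i)
   = \sum_i \sum_i' (v i)^* * ((K j i)^* * Z j j' * K j' i') * v i'.
  move=> j j'; rewrite rmorph_sum mulr_suml mulr_suml; apply: eq_bigr => i _.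
  rewrite mulr_sumr; apply: eq_bigr => i' _; rewrite rmorphM; ring.
under [RHS]eq_bigr => j _ do under eq_bigr => j' _ do rewrite E1.
have E2 : forall i i', (v i)^* * (\sum_j \sum_j' (K j i)^* * Z j j' * K j' i') * v i'
   = \sum_j \sum_j' (v i)^* * ((K j i)^* * Z j j' * K j' i') * v i'.
  move=> i i'; rewrite mulr_sumr mulr_suml; apply: eq_bigr => j _.
  by rewrite mulr_sumr mulr_suml.
rewrite (eq_bigr _ (fun i _ => eq_bigr _ (fun i' _ => E2 i i'))).
rewrite (eq_bigr _ (fun i _ => exchange_big _ _ _ _ _ _)).
rewrite (eq_bigr _ (fun i _ => eq_bigr _ (fun j _ => exchange_big _ _ _ _ _ _))).
rewrite exchange_big.
rewrite (eq_bigr _ (fun j _ => exchange_big _ _ _ _ _ _)).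
by [].
Qed.
Lemma quad_one (I : finType) (Z : Op I) x :
  quad Z (fun i => (i == x)%:R) = Z x x.
Proof.
rewrite /quad; under eq_bigr => i _ do rewrite conjC_nat (sum_deltar x (fun j => (i == x)%:R * Z i j)).
exact: (sum_deltal x (fun i => Z i x)).
Qed.

Lemma sum_lin2 (I : finType) (F : I -> CC) a b x y :
  \sum_j F j * (a * (j == x)%:R + b * (j == y)%:R) = F x * a + F y * b.
Proof.
transitivity (\sum_j ((F j * a) * (j == x)%:R + (F j * b) * (j == y)%:R)).
  by apply: eq_bigr => j _; ring.
by rewrite big_split (sum_deltar x (fun j => F j * a)) (sum_deltar y (fun j => F j * b)).
Qed.

Lemma quad_two (I : finType) (Z : Op I) x y t :
  quad Z (fun i => 1 * (i == x)%:R + t * (i == y)%:R)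
  = Z x x + Z x y * t + t^* * Z y x + t^* * Z y y * t.
Proof.
rewrite /quad.
under eq_bigr => i _ do rewrite (sum_lin2 (fun j => (1 * (i == x)%:R + t * (i == y)%:R)^* * Z i j)).
transitivity (\sum_i (Z i x * 1 + Z i y * t) * (1 * (i == x)%:R + t^* * (i == y)%:R)).
  apply: eq_bigr => i _; rewrite rmorphD !rmorphM rmorph1 !rmorph_nat; ring.
rewrite (sum_lin2 (fun i => Z i x * 1 + Z i y * t) 1 t^* x y). ring.
Qed.

Lemma psd_herm (I : finType) (R : Op I) : psd R -> forall x y, R x y = (R y x)^*.
Proof.
move=> HR0 x y.
have HR : forall v, 0 <= quad R v := HR0.
have hd : forall z, (R z z)^* = R z z.
  by move=> z; have := geC0_conj (HR (fun i => (i == z)%:R)); rewrite quad_one.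
have [<-|nxy] := eqVneq x y; first by rewrite hd.
have h1 := geC0_conj (HR (fun i => 1 * (i == x)%:R + 1 * (i == y)%:R)).
have h2 := geC0_conj (HR (fun i => 1 * (i == x)%:R + 'i * (i == y)%:R)).
rewrite (quad_two R x y 1) in h1; rewrite (quad_two R x y 'i) in h2.
have e : 'i *+ 2 * (R x y - (R y x)^*) =
   - 'i * ((R x x + R x y * 1 + 1^* * R y x + 1^* * R y y * 1)^*
          - (R x x + R x y * 1 + 1^* * R y x + 1^* * R y y * 1))
   - ((R x x + R x y * 'i + 'i^* * R y x + 'i^* * R y y * 'i)^*
     - (R x x + R x y * 'i + 'i^* * R y x + 'i^* * R y y * 'i)).
  rewrite !cD !cM !c1 !cK !ci !hd; ring.
rewrite h1 h2 !subrr mulr0 subr0 in e.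
apply/eqP; rewrite -subr_eq0; apply/eqP.
move/eqP: e; rewrite mulf_eq0 => /orP[|/eqP //].
by rewrite mulrn_eq0 /= (negbTE (neq0Ci _)).
Qed.
Lemma psd_gram (I : finType) (R : Op I) : psd R ->
  exists n (d : 'I_n -> CC) (w : 'I_n -> I -> CC),
    (forall k, 0 <= d k) /\ (forall i j, R i j = \sum_k d k * (w k i)^* * w k j).
Proof.
move=> HR; have Hh := psd_herm HR.
pose M : 'M[CC]_#|I| := \matrix_(i, j) R (enum_val i) (enum_val j).
have herm : M \is hermsymmx.
  apply/is_hermitianmxP; rewrite expr0 scale1r; apply/matrixP => i j; rewrite !mxE.
  exact: Hh.
have /orthomx_spectralP HM := hermitian_normalmx herm.
have PU := spectral_unitarymx M.
move: HM PU; set P := spectralmx M; set D := spectral_diag M => HM PU.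
rewrite (invmx_unitary PU) in HM.
exists #|I|, (fun k => D 0 k), (fun k x => P k (enum_rank x)); split.
  move=> k.
  have : diag_mx D = P *m M *m (P ^t Num.conj)%sesqui.
    rewrite [in RHS]HM !mulmxA (unitarymxP PU) mul1mx -mulmxA (unitarymxP PU).
    by rewrite mulmx1.
  move/matrixP/(_ k k); rewrite !mxE eqxx mulr1n => ->.
  have := HR (fun x => (P k (enum_rank x))^*).
  have bv := onW_bij [pred i : I | true] (@enum_val_bij I).
  rewrite (reindex _ bv); under eq_bigr => i _ do rewrite (reindex _ bv).
  congr (_ <= _).
  under eq_bigr => i _ do under eq_bigr => j _ do rewrite !enum_valK cK.
  rewrite exchange_big; apply: eq_bigr => j _.
  rewrite !mxE mulr_suml.
  by apply: eq_bigr => i _; rewrite !mxE.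
move=> x y.
move/matrixP: HM => /(_ (enum_rank x) (enum_rank y)).
rewrite mul_mx_diag !mxE !enum_rankK => ->.
by apply: eq_bigr => k _; rewrite !mxE; ring.
Qed.
Definition E (C : finType) (c c' : C) : Op C := fun i j => ((i == c) && (j == c'))%:R.
Definition Jp (C Y : finType) (G : Map C Y) : Op (prod Y C) :=
  fun p q => choi G (p.2, p.1) (q.2, q.1).
Definition mapOf (C Y : finType) (R : Op (prod Y C)) : Map C Y :=
  fun X b b' => #|C|%:R * \sum_c \sum_c' X c c' * R (b, c) (b', c').

Lemma JpE (C Y : finType) (G : Map C Y) b c b' c' :
  Jp G (b, c) (b', c') = #|C|%:R^-1 * G (E c c') b b'.
Proof. by []. Qed.

Lemma lin_ext (I J : finType) (G : Map I J) (X Y : Op I) j j' :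
  (forall i i', X i i' = Y i i') -> G X j j' = G Y j j'.
Proof.
move=> h; have -> // : X = Y.
by apply: functional_extensionality => i; apply: functional_extensionality => i'.
Qed.

Section Lin.
Variables (I J : finType) (G : Map I J).
Hypothesis HG : linear_map G.

Lemma lin0 j j' : G (fun _ _ => 0) j j' = 0.
Proof.
have := HG 1 (fun _ _ => 0) (fun _ _ => 0) j j'.
rewrite (@lin_ext _ _ G (fun i i' => 1 * 0 + 0) (fun _ _ => 0)); last by move=> *; ring.
rewrite mul1r => h.
by have := congr1 (fun z => z - G (fun _ _ => 0) j j') h; rewrite subrr addrK.
Qed.

Lemma linZ a X j j' : G (fun i i' => a * X i i') j j' = a * G X j j'.
Proof.
have := HG a X (fun _ _ => 0) j j'; rewrite lin0 addr0 => <-.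
by apply: lin_ext => *; rewrite addr0.
Qed.

Lemma linD X Y j j' : G (fun i i' => X i i' + Y i i') j j' = G X j j' + G Y j j'.
Proof.
have := HG 1 X Y j j'; rewrite mul1r => <-.
by apply: lin_ext => *; rewrite mul1r.
Qed.

Lemma lin_sum (K : finType) (F : K -> Op I) j j' :
  G (fun i i' => \sum_k F k i i') j j' = \sum_k G (F k) j j'.
Proof.
rewrite /index_enum; elim: (Finite.enum K) => [|k s IH].
  by rewrite big_nil; under lin_ext do rewrite big_nil; exact: lin0.
rewrite big_cons; under lin_ext do rewrite big_cons.
by rewrite linD IH.
Qed.

Lemma recon X j j' : G X j j' = \sum_c \sum_c' X c c' * G (E c c') j j'.
Proof.
rewrite (@lin_ext _ _ G X (fun i i' => \sum_c \sum_c' X c c' * E c c' i i')).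
  rewrite lin_sum; apply: eq_bigr => c _; rewrite lin_sum.
  by apply: eq_bigr => c' _; rewrite linZ.
move=> i i'.
transitivity (\sum_c \sum_c' (X c c' * (c == i)%:R) * (c' == i')%:R).
  rewrite (eq_bigr (fun c => X c i' * (c == i)%:R)); first by rewrite sum_deltar.
  by move=> c _; rewrite sum_deltar.
apply: eq_bigr => c _; apply: eq_bigr => c' _; rewrite /E -mulrA; congr (_ * _).
by rewrite ![_ == c]eq_sym ![_ == c']eq_sym; case: (c == i); case: (c' == i'); rewrite ?mulr1 ?mulr0 ?mul0r.
Qed.
End Lin.

Lemma mapOf_Jp (C Y : finType) (G : Map C Y) (hC : (0 < #|C|)%N) :
  linear_map G -> forall X b b', mapOf (Jp G) X b b' = G X b b'.
Proof.
move=> HG X b b'; rewrite (recon HG) /mapOf mulr_sumr; apply: eq_bigr => c _.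
rewrite mulr_sumr; apply: eq_bigr => c' _; rewrite JpE.
have h : (#|C|%:R : CC) != 0 by rewrite pnatr_eq0 -lt0n.
by field.
Qed.

Lemma lin_mapOf (C Y : finType) (R : Op (prod Y C)) : linear_map (mapOf R).
Proof.
move=> a X Y' j j'; rewrite /mapOf.
rewrite mulrA [_ * #|C|%:R]mulrC -mulrA -mulrDr; congr (_ * _).
rewrite mulr_sumr -sumD; apply: eq_bigr => c _.
rewrite mulr_sumr -sumD; apply: eq_bigr => c' _; ring.
Qed.
Lemma natr_and (a b : bool) : ((a && b)%:R : CC) = a%:R * b%:R.
Proof. by case: a; case: b; rewrite ?mulr1 ?mulr0. Qed.

Lemma CP_Jp_psd (C Y : finType) (G : Map C Y) : CP G -> psd (Jp G).
Proof.
move=> [HL HP].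
pose X : Op (prod 'I_#|C| C) :=
  fun p q => ((enum_val p.1 == p.2) && (enum_val q.1 == q.2))%:R.
have HX : psd X.
  move=> v; pose s := \sum_p (enum_val p.1 == p.2)%:R * v p.
  suff -> : \sum_i \sum_j (v i)^* * X i j * v j = s^* * s by rewrite mulrC; apply: mul_conjC_ge0.
  rewrite /s cSum mulr_suml; apply: eq_bigr => p _; rewrite mulr_sumr.
  apply: eq_bigr => q _; rewrite /X natr_and cM cnat; ring.
pose f := fun y : prod Y C => (enum_rank y.2, y.1).
pose g := fun p : prod 'I_#|C| Y => (p.2, enum_val p.1).
have fK : cancel f g by move=> [b c]; rewrite /f /g /= enum_rankK.
have gK : cancel g f by move=> [p b]; rewrite /f /g /= enum_valK.
have -> : Jp G = fun y y' => #|C|%:R^-1 * ampl G X (f y) (f y').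
  apply: functional_extensionality => -[b c]; apply: functional_extensionality => -[b' c'].
  rewrite JpE /ampl /f /=.
  have -> // : E c c' = (fun i i' => X (enum_rank c, i) (enum_rank c', i')).
  apply: functional_extensionality => i; apply: functional_extensionality => i'.
  by rewrite /X /E /= !enum_rankK [c == _]eq_sym [c' == _]eq_sym.
apply: psd_scale; first by rewrite invr_ge0 ler0n.
exact: (psd_reindex fK gK (HP _ X HX)).
Qed.

Lemma sum_pair_delta (I J : finType) (p : I) (F : I -> J -> CC) :
  \sum_(u : prod I J) (u.1 == p)%:R * F u.1 u.2 = \sum_j F p j.
Proof.
rewrite -(sum_deltal p (fun i => \sum_j F i j)) sum_pair.
by apply: eq_bigr => i _; rewrite mulr_sumr.
Qed.

Lemma psd_CP (C Y : finType) (R : Op (prod Y C)) : psd R -> CP (mapOf R).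
Proof.
move=> HR; split; first exact: lin_mapOf.
move=> k X HX.
have [n [d [w [d0 Rw]]]] := psd_gram HR.
pose K := fun (m : 'I_n) (u : prod 'I_k C) (s : prod 'I_k Y) =>
  (u.1 == s.1)%:R * w m (s.2, u.2).
have -> : ampl (mapOf R) X = fun s t => #|C|%:R *
   \sum_m d m * (\sum_u \sum_u' (K m u s)^* * X u u' * K m u' t).
  apply: functional_extensionality => -[p b]; apply: functional_extensionality => -[q b'].
  rewrite /ampl /mapOf; cbn [fst snd]; congr (_ * _).
  have e : forall m, \sum_u \sum_u' (K m u (p, b))^* * X u u' * K m u' (q, b')
     = \sum_c \sum_c' (w m (b, c))^* * X (p, c) (q, c') * w m (b', c').
    move=> m.
    transitivity (\sum_(u : prod 'I_k C) (u.1 == p)%:R *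
       (fun p' c => \sum_(u' : prod 'I_k C) (u'.1 == q)%:R *
          (fun q' c' => (w m (b, c))^* * X (p', c) (q', c') * w m (b', c')) u'.1 u'.2) u.1 u.2).
      apply: eq_bigr => -[p' c] _; rewrite mulr_sumr; apply: eq_bigr => -[q' c'] _.
      by rewrite /K; cbn [fst snd]; rewrite cM cnat; ring.
    rewrite (sum_pair_delta p (fun p' c => \sum_(u' : prod 'I_k C) (u'.1 == q)%:R *
      ((w m (b, c))^* * X (p', c) (u'.1, u'.2) * w m (b', u'.2)))).
    apply: eq_bigr => c _.
    by rewrite (sum_pair_delta q (fun q' c' => (w m (b,c))^* * X (p,c) (q',c') * w m (b',c'))).
  under [RHS]eq_bigr => m _ do rewrite e mulr_sumr.
  rewrite [RHS]exchange_big; apply: eq_bigr => c _.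
  under [RHS]eq_bigr => m _ do rewrite mulr_sumr.
  rewrite [RHS]exchange_big; apply: eq_bigr => c' _.
  rewrite Rw mulr_sumr; apply: eq_bigr => m _; ring.
apply: psd_scale; first exact: ler0n.
refine (@psd_sum _ _ (fun m s t => d m * (\sum_u \sum_u' (K m u s)^* * X u u' * K m u' t)) _).
move=> m; apply: psd_scale => //; exact: psd_pull.
Qed.
Lemma sum_unit (F : unit -> CC) : \sum_o F o = F tt.
Proof. by rewrite -(sum_deltal' tt F); apply: eq_bigr => -[] _; rewrite eqxx mul1r. Qed.

Lemma choiE (C Y : finType) (G : Map C Y) c y c' y' :
  choi G (c, y) (c', y') = #|C|%:R^-1 * G (E c c') y y'.
Proof. by []. Qed.

Lemma opmul_id (I J : finType) (Z : Op (prod I J)) p q :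
  opmul (tens (@idop I) (@idop J)) Z p q = Z p q.
Proof.
case: p => i j; rewrite /opmul sum_pair.
transitivity (\sum_i0 (i == i0)%:R * (\sum_j0 (j == j0)%:R * Z (i0, j0) q)).
  apply: eq_bigr => i0 _; rewrite mulr_sumr; apply: eq_bigr => j0 _.
  by rewrite /tens /idop; cbn [fst snd]; ring.
rewrite (sum_deltal' i (fun i0 => \sum_j0 (j == j0)%:R * Z (i0, j0) q)).
exact: (sum_deltal' j (fun j0 => Z (i, j0) q)).
Qed.

Lemma psd_idop (I : finType) : psd (@idop I).
Proof.
move=> v.
have -> : \sum_i \sum_j (v i)^* * idop i j * v j = \sum_i (v i)^* * v i.
  apply: eq_bigr => i _.
  rewrite -(sum_deltal' i (fun j => (v i)^* * v j)); apply: eq_bigr => j _.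
  rewrite /idop; ring.
by apply: sumr_ge0 => i _; rewrite mulrC; exact: mul_conjC_ge0.
Qed.

Definition ind (A B C : finType) (LAB : Map C (prod A B)) (T : Op A) : Map C B :=
  fun X => ptr1 (opmul (tens T (@idop B)) (LAB X)).

Section Assem.
Variables (A B C : finType) (LAB : Map C (prod A B)).
Hypothesis hC : (0 < #|C|)%N.
Hypothesis HL : linear_map LAB.

Lemma ind_lin T : linear_map (ind LAB T).
Proof.
move=> a X Y j j'; rewrite /ind /ptr1 /opmul mulr_sumr -sumD; apply: eq_bigr => a0 _.
rewrite mulr_sumr -sumD; apply: eq_bigr => k _; rewrite HL; ring.
Qed.

Lemma ind_id X b b' : ind LAB (@idop A) X b b' = ptr1 (LAB X) b b'.
Proof. by rewrite /ind /ptr1; apply: eq_bigr => a _; rewrite opmul_id. Qed.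

Lemma ind_sum (O : finType) (T : O -> Op A) X b b' :
  \sum_o ind LAB (T o) X b b' = ind LAB (fun i j => \sum_o T o i j) X b b'.
Proof.
rewrite /ind /ptr1 exchange_big; apply: eq_bigr => a0 _.
rewrite /opmul exchange_big; apply: eq_bigr => k _.
by rewrite /tens -!mulr_suml.
Qed.

Lemma SA_eq T b c b' c' :
  ptr1 (opmul (tens T (@idop (prod B C))) (regroup_A_BC (choi LAB))) (b, c) (b', c')
  = Jp (ind LAB T) (b, c) (b', c').
Proof.
rewrite JpE /ind /ptr1 /opmul mulr_sumr; apply: eq_bigr => a0 _.
rewrite mulr_sumr !sum_pair; apply: eq_bigr => a1 _.
transitivity (\sum_(y : prod B C) ((b, c) == y)%:R *
   (T a0 a1 * choi LAB (y.2, (a1, y.1)) (c', (a0, b')))).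
  apply: eq_bigr => y _; rewrite /tens /idop /regroup_A_BC; cbn [fst snd]; ring.
rewrite (sum_deltal' (b, c) (fun y => T a0 a1 * choi LAB (y.2, (a1, y.1)) (c', (a0, b')))).
transitivity (#|C|%:R^-1 * \sum_b1 (b == b1)%:R * (T a0 a1 * LAB (E c c') (a1, b1) (a0, b'))).
  rewrite (sum_deltal' b (fun b1 => T a0 a1 * LAB (E c c') (a1, b1) (a0, b'))).
  by cbn [fst snd]; rewrite choiE; ring.
rewrite mulr_sumr; apply: eq_bigr => b1 _.
by rewrite /tens /idop; cbn [fst snd]; ring.
Qed.

Lemma ptr1_rho y y' :
  ptr1 (regroup_A_BC (choi LAB)) y y' = Jp (ind LAB (@idop A)) y y'.
Proof.
case: y => b c; case: y' => b' c'; rewrite -SA_eq /ptr1.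
by apply: eq_bigr => a _; rewrite opmul_id.
Qed.

Lemma mapOf_comb (L : finType) (cf : L -> CC) (Rl : L -> Op (prod B C)) X b b' :
  mapOf (fun y y' => \sum_l cf l * Rl l y y') X b b' = \sum_l cf l * mapOf (Rl l) X b b'.
Proof.
rewrite /mapOf.
transitivity (\sum_l \sum_c \sum_c' #|C|%:R * (cf l * (X c c' * Rl l (b, c) (b', c')))).
  rewrite mulr_sumr [RHS]exchange_big; apply: eq_bigr => c _.
  rewrite mulr_sumr [RHS]exchange_big; apply: eq_bigr => c' _.
  rewrite !mulr_sumr; apply: eq_bigr => l _; ring.
apply: eq_bigr => l _; rewrite !mulr_sumr; apply: eq_bigr => c _.
rewrite !mulr_sumr; apply: eq_bigr => c' _; ring.
Qed.

Lemma mapOf_ext (R1 R2 : Op (prod B C)) X b b' :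
  (forall y y', R1 y y' = R2 y y') -> mapOf R1 X b b' = mapOf R2 X b b'.
Proof.
move=> h; rewrite /mapOf; congr (_ * _); apply: eq_bigr => c _; apply: eq_bigr => c' _.
by rewrite h.
Qed.

Lemma Jp_sum (L : finType) (Gl : L -> Map C B) :
  (forall Z b b', \sum_l Gl l Z b b' = ptr1 (LAB Z) b b') ->
  forall y y', \sum_l Jp (Gl l) y y' = ptr1 (regroup_A_BC (choi LAB)) y y'.
Proof.
move=> h [b c] [b' c']; rewrite ptr1_rho JpE ind_id -h mulr_sumr.
by apply: eq_bigr => l _; rewrite JpE.
Qed.
End Assem.
Lemma dir2 (A B C : finType) (hC : (0 < #|C|)%N) (LAB : Map C (prod A B)) :
  channel LAB -> unsteerable_state (regroup_A_BC (choi LAB)) -> unsteerable_extension LAB.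
Proof.
move=> [[HL HP] HT] Hs Xs O M HM.
have [L [rl [p [rl0 [rsum [pc req]]]]]] := Hs Xs O M HM.
exists L, (fun l => mapOf (rl l)), p; split; [|split] => //.
  split; first by move=> l; exact: psd_CP.
  have -> : (fun X b b' => \sum_l mapOf (rl l) X b b') =
            mapOf (fun y y' => \sum_l 1 * rl l y y').
    apply: functional_extensionality => X; apply: functional_extensionality => b.
    apply: functional_extensionality => b'.
    by rewrite mapOf_comb; apply: eq_bigr => l _; rewrite mul1r.
  split.
    apply: psd_CP; refine (@psd_sum _ _ (fun l y y' => 1 * rl l y y') _) => l.
    by apply: psd_scale => //; exact: ler01.
  move=> X; rewrite -HT /tr.
  have e : forall b, mapOf (fun y y' => \sum_l 1 * rl l y y') X b b = ptr1 (LAB X) b b.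
    move=> b; rewrite -ind_id -(mapOf_Jp hC (ind_lin HL (@idop A))).
    apply: mapOf_ext => -[b1 c1] [b2 c2].
    rewrite -ptr1_rho -rsum; apply: eq_bigr => l _; exact: mul1r.
  under eq_bigr do rewrite e.
  rewrite /ptr1 sum_pair exchange_big; exact: eq_bigr.
move=> x a X b b'.
rewrite -mapOf_comb.
have -> : induced_chan_assemblage LAB M x a X b b' = ind LAB (M x a) X b b' by [].
rewrite -(mapOf_Jp hC (ind_lin HL (M x a))).
apply: mapOf_ext => -[b1 c1] [b2 c2].
by rewrite -SA_eq req.
Qed.

Lemma dir1 (A B C : finType) (hA : (0 < #|A|)%N) (hC : (0 < #|C|)%N)
   (LAB : Map C (prod A B)) :
  channel LAB -> unsteerable_extension LAB -> unsteerable_state (regroup_A_BC (choi LAB)).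
Proof.
move=> [[HL HP] HT] He Xs O M HM.
case: (pickP (fun _ : Xs => true)) => [x0 _ | hXs].
  have [L [Gl [p [[GCP Gch] [pc geq]]]]] := He Xs O M HM.
  exists L, (fun l => Jp (Gl l)), p; split; [|split; [|split]] => //.
  - by move=> l; exact: CP_Jp_psd.
  - apply: Jp_sum => Z b b'.
    rewrite -ind_id.
    have -> : (@idop A) = (fun i j => \sum_a M x0 a i j).
      apply: functional_extensionality => i; apply: functional_extensionality => j.
      by have [_ ->] := HM x0.
    rewrite -ind_sum.
    under [RHS]eq_bigr => a _ do rewrite -[ind _ _ _ _ _]/(induced_chan_assemblage LAB M x0 a Z b b') geq.
    rewrite exchange_big; apply: eq_bigr => l _.
    by rewrite -mulr_suml (proj2 pc x0 l) mul1r.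
  - move=> x a [b c] [b' c'].
    rewrite SA_eq JpE.
    rewrite -[ind _ _ _ _ _]/(induced_chan_assemblage LAB M x a (E c c') b b') geq.
    rewrite mulr_sumr; apply: eq_bigr => l _; rewrite JpE; ring.
pose M' : unit -> unit -> Op A := fun _ _ => @idop A.
have HM' : meas_assemblage M'.
  move=> x; split; first by move=> o; exact: psd_idop.
  by move=> i j; rewrite sum_unit.
have [L [Gl [p [[GCP Gch] [pc geq]]]]] := He unit unit M' HM'.
exists L, (fun l => Jp (Gl l)), (fun _ _ _ => 0); split; [|split; [|split]].
- by move=> l; exact: CP_Jp_psd.
- apply: Jp_sum => Z b b'.
  rewrite -ind_id.
  rewrite -[ind _ _ _ _ _]/(induced_chan_assemblage LAB M' tt tt Z b b') geq.
  apply: eq_bigr => l _.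
  have := proj2 pc tt l; rewrite sum_unit => ->; by rewrite mul1r.
- by split => x; have := hXs x.
- by move=> x; have := hXs x.
Qed.

Theorem theorem1 (A B C : finType)
    (hA : (0 < #|A|)%N) (hB : (0 < #|B|)%N) (hC : (0 < #|C|)%N)
    (LAB : Map C (prod A B)) (LB : Map C B) :
  channel_extension LAB LB ->
  (steerable_extension LAB <-> steerable_state (regroup_A_BC (choi LAB))).
Proof.
move=> [Hch _]; rewrite /steerable_extension /steerable_state.
have h1 := dir1 hA hC Hch; have h2 := dir2 hC Hch.
by split => H1 H2; apply: H1; [apply: h2 | apply: h1].
Qed.
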